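(* Let $\mathcal{N}=(\mathcal{S},\mathcal{C},\mathcal{R})$ be an open chemical reaction network. Then $\ker(J_c(f_\kappa))\cap\Gamma\neq\{0\}$ for all $\kappa\in\mathbb{R}_+^{\mathcal{R}}$ and all $c\in\mathbb{R}^n_+$ if and only if for every set of $n$ reactions $y^1\to y'^1,\dots,y^n\to y'^n$ of $\mathcal{N}$ such that the vectors $y^1-y'^1,\dots,y^n-y'^n$ are linearly independent, the complexes $y^1,\dots,y^n$ are linearly dependent.
   Context: A chemical reaction network $\mathcal{N}=(\mathcal{S},\mathcal{C},\mathcal{R})$ consists of a finite set of species $\mathcal{S}=\{S_1,\dots,S_n\}$, a finite set of complexes $\mathcal{C}\subset\mathbb{Z}_{\ge 0}^n$ (species $S_i$ identified with the $i$-th standard basis vector), and a finite set of reactions $\mathcal{R}\subset\mathcal{C}\times\mathcal{C}$, written $y\to y'$, with $y\ne y'$. A rate vector is $\kappa=(k_{y\to y'})\in\mathbb{R}_+^{\mathcal{R}}$ ($\mathbb{R}_+$ the positive reals); the mass-action species formation rate function is $f_\kappa(c)=\sum_{y\to y'\in\mathcal{R}}k_{y\to y'}c^y(y'-y)$, $c^y=\prod_i c_i^{y_i}$, with Jacobian $J_c(f_\kappa)$ at $c$. The stoichiometric subspace is $\Gamma=\mathrm{span}\{y'-y:y\to y'\in\mathcal{R}\}$; the network is open if $\Gamma=\mathbb{R}^n$. *)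

(* Defs.v *)
From HB Require Import structures.
From mathcomp Require Import all_boot all_order all_algebra.
From mathcomp Require Import all_classical all_reals all_analysis.
Set Implicit Arguments. Unset Strict Implicit. Unset Printing Implicit Defensive.
Import Order.TTheory GRing.Theory Num.Theory.
Local Open Scope ring_scope.

(* A chemical reaction network on n species with m reactions: reaction r is
   [src r -> tgt r], complexes are vectors in Z_{>=0}^n (row vectors of nats). *)

Definition cplx (R : ringType) (n : nat) (y : 'rV[nat]_n) : 'rV[R]_n :=
  map_mx (fun k : nat => k%:R) y.

Definition crn_wf (n m : nat) (src tgt : 'I_m -> 'rV[nat]_n) : Prop :=
  injective (fun r => (src r, tgt r)) /\ (forall r, src r <> tgt r).

Definition monom (R : ringType) (n : nat) (c : 'rV[R]_n) (y : 'rV[nat]_n) : R :=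
  \prod_(i < n) c 0 i ^+ y 0 i.

Definition fkappa (R : ringType) (n m : nat) (src tgt : 'I_m -> 'rV[nat]_n)
  (k : 'I_m -> R) (c : 'rV[R]_n) : 'rV[R]_n :=
  \sum_(r < m) (k r * monom c (src r)) *: (cplx R (tgt r) - cplx R (src r)).

(* Stoichiometric subspace Gamma: row space of the matrix of reaction vectors. *)
Definition stoich (R : ringType) (n m : nat) (src tgt : 'I_m -> 'rV[nat]_n)
  : 'M[R]_(m, n) :=
  \matrix_(r < m) (cplx R (tgt r) - cplx R (src r)).

Definition crn_open (R : fieldType) (n m : nat) (src tgt : 'I_m -> 'rV[nat]_n) :=
  row_full (stoich R src tgt).

(* Main.v *)
Require Import Defs.
From HB Require Import structures.
From mathcomp Require Import all_boot all_order all_algebra.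
From mathcomp Require Import all_classical all_reals all_analysis.
From mathcomp Require Import ring.
From mathcomp Require Import fingroup perm.
Import Order.TTheory GRing.Theory Num.Theory.
Import numFieldNormedType.Exports.
Set Implicit Arguments. Unset Strict Implicit. Unset Printing Implicit Defensive.
Local Open Scope ring_scope.

Section CB.
Variable R : comRingType.
Definition rowsf n m (f : 'I_n -> 'I_m) (A : 'M[R]_(m,n)) : 'M[R]_n :=
  \matrix_(i,j) A (f i) j.

Lemma CB1 n m (A B : 'M[R]_(m,n)) (l : 'I_m -> R) :
  \det (\matrix_(i,j) \sum_r A r i * l r * B r j) =
  \sum_(f : {ffun 'I_n -> 'I_m})
     (\prod_i l (f i)) * (\prod_i A (f i) i) * \det (rowsf f B).
Proof.
rewrite [LHS]/determinant.
under eq_bigr => s _.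
  rewrite (eq_bigr (fun i => \sum_r A r i * l r * B r (s i))); last by move=> i _; rewrite mxE.
  rewrite bigA_distr_bigA big_distrr /=.
  over.
rewrite exchange_big /=; apply: eq_bigr => f _.
rewrite /determinant big_distrr /=; apply: eq_bigr => s _.
rewrite mulrCA; congr (_ * _).
rewrite (eq_bigr (fun i => A (f i) i * l (f i) * B (f i) (s i))); last by [].
rewrite !big_split /=.
under [X in _ = _ * X]eq_bigr => i _ do rewrite mxE.
by rewrite [_ * \prod_i l _]mulrC.
Qed.

Lemma det_rowperm n (s : 'S_n) (M : 'M[R]_n) :
  \det (\matrix_(i,j) M (s i) j) = (-1) ^+ s * \det M.
Proof.
have -> : \matrix_(i,j) M (s i) j = row_perm s M.
  by apply/matrixP => i j; rewrite !mxE.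
by rewrite row_permE det_mulmx det_perm.
Qed.

Lemma CB2 n m (A B : 'M[R]_(m,n)) (l : 'I_m -> R) :
  n`!%:R * \det (\matrix_(i,j) \sum_r A r i * l r * B r j) =
  \sum_(f : {ffun 'I_n -> 'I_m})
     (\prod_i l (f i)) * \det (rowsf f A) * \det (rowsf f B).
Proof.
rewrite CB1 -card_Sn mulr_natl -sumr_const.
have step : forall s : 'S_n,
  \sum_(f : {ffun 'I_n -> 'I_m})
     (\prod_i l (f i)) * (\prod_i A (f i) i) * \det (rowsf f B) =
  \sum_(f : {ffun 'I_n -> 'I_m})
     (\prod_i l (f i)) * (-1) ^+ s * (\prod_i A (f (s i)) i) * \det (rowsf f B).
  move=> s.
  pose h := fun f : {ffun 'I_n -> 'I_m} => [ffun i => f (s i)].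
  have hinj : injective h.
    move=> f g /ffunP E; apply/ffunP => i.
    by have := E (s^-1 i)%g; rewrite !ffunE permKV.
  rewrite (reindex_inj hinj) /=; apply: eq_bigr => f _.
  under eq_bigr => i _ do rewrite ffunE.
  under [X in _ * X * _]eq_bigr => i _ do rewrite ffunE.
  have -> : rowsf (h f) B = \matrix_(i,j) (rowsf f B) (s i) j.
    by apply/matrixP => i j; rewrite !mxE ffunE.
  rewrite det_rowperm.
  have -> : \prod_i l (f (s i)) = \prod_i l (f i).
    by rewrite [RHS](reindex_inj (@perm_inj _ s)).
  by rewrite -!mulrA; congr (_ * _); rewrite mulrCA.
rewrite (eq_bigr _ (fun s _ => step s)) exchange_big /=.
apply: eq_bigr => f _.
have key : \det (rowsf f A) = \sum_(s : 'S_n) (-1) ^+ s * \prod_i A (f (s i)) i.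
  rewrite -det_tr; apply: eq_bigr => s _; congr (_ * _).
  by apply: eq_bigr => i _; rewrite !mxE.
set d := \det (rowsf f B).
rewrite key mulrAC big_distrr /=.
apply: eq_big => // s _.
by rewrite mulrAC -!mulrA.
Qed.
End CB.

Section An.
Variable R : realType.

Lemma is_diff_coord n (c : 'rV[R]_n) (i : 'I_n) :
  is_diff c (fun z : 'rV[R]_n => z 0 i) (fun v => v 0 i).
Proof.
have @f : {linear 'rV[R]_n -> R}.
  by exists (fun N : 'rV[R]_n => N 0 i); do 2![eexists]; do ?[constructor];
     rewrite ?mxE// => ? *; rewrite ?mxE//; move=> ?; rewrite !mxE.
have -> : (fun z : 'rV[R]_n => z 0 i) = f by [].
apply: DiffDef; first exact: differentiable_coord.
by rewrite diff_lin //; apply: coord_continuous.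
Qed.

Lemma is_diff_pow n (c : 'rV[R]_n) (i : 'I_n) (e : nat) :
  is_diff c (fun z : 'rV[R]_n => z 0 i ^+ e) (fun v => e%:R * c 0 i ^+ e.-1 * v 0 i).
Proof.
case: e => [|e].
  have -> : (fun z : 'rV[R]_n => z 0 i ^+ 0) = cst 1 by apply/funext => z; rewrite expr0.
  apply: (is_diff_eq (is_diff_cst (1:R) c)).
  by apply/funext => v; rewrite mul0r mul0r.
have -> : (fun z : 'rV[R]_n => z 0 i ^+ e.+1) = (fun z : 'rV[R]_n => z 0 i) ^+ e.+1.
  by rewrite exprfctE.
apply: (is_diff_eq (is_diffX e (is_diff_coord c i))).
by apply/funext => v.
Qed.


Lemma is_diff_mon n (c : 'rV[R]_n) (y : 'rV[nat]_n) (s : seq 'I_n) :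
  (forall i, c 0 i != 0) ->
  is_diff c (fun z : 'rV[R]_n => \prod_(i <- s) z 0 i ^+ y 0 i)
    (fun v => (\prod_(i <- s) c 0 i ^+ y 0 i) *
              \sum_(i <- s) (y 0 i)%:R * v 0 i / c 0 i).
Proof.
move=> c0; elim: s => [|a s IH].
  have -> : (fun z : 'rV[R]_n => \prod_(i <- [::]) z 0 i ^+ y 0 i) = cst 1.
    by apply/funext => z; rewrite big_nil.
  apply: (is_diff_eq (is_diff_cst (1:R) c)).
  by apply/funext => v; rewrite !big_nil mulr0.
have -> : (fun z : 'rV[R]_n => \prod_(i <- a :: s) z 0 i ^+ y 0 i) =
   (fun z : 'rV[R]_n => z 0 a ^+ y 0 a) * (fun z : 'rV[R]_n => \prod_(i <- s) z 0 i ^+ y 0 i).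
  by apply/funext => z; rewrite big_cons.
apply: (is_diff_eq (is_diffM (is_diff_pow c a (y 0 a)) IH)).
apply/funext => v /=; rewrite !big_cons mulrDr.
set P := \prod_(j <- s) _; set S := \sum_(j <- s) _.
transitivity (c 0 a ^+ y 0 a * (P * S) + P * ((y 0 a)%:R * c 0 a ^+ (y 0 a).-1 * v 0 a)); first by [].
rewrite addrC; congr (_ + _); last by rewrite mulrA.
have := c0 a; case: (y 0 a) => [|e] ca /=; first by rewrite !mul0r !mulr0.
rewrite exprS; field; exact: ca.
Qed.

Lemma is_diffZl' (V W : normedModType R) (h : V -> R) (dh : V -> R) (w : W) x :
  is_diff x h dh -> is_diff x (fun z => h z *: w) (fun v => dh v *: w).
Proof.
move=> H; apply: DiffDef; first exact: differentiableZl.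
by rewrite diffZl // diff_val.
Qed.

Lemma is_diff_sum' (V W : normedModType R) m (f df : 'I_m -> V -> W) x :
  (forall i, is_diff x (f i) (df i)) ->
  is_diff x (\sum_(i < m) f i) (\sum_(i < m) df i).
Proof.
move=> H; elim/big_ind2 : _ => //.
  exact: (is_diff_cst (0:W) x).
by move=> ? ? ? ? ? ?; exact: is_diffD.
Qed.

Lemma jacE n m (src tgt : 'I_m -> 'rV[nat]_n) (k : 'I_m -> R) (c : 'rV[R]_n) :
  (forall i, c 0 i != 0) ->
  'J (fkappa src tgt k) c =
  \matrix_(i, j) \sum_r ((src r 0 i)%:R / c 0 i) * (k r * monom c (src r)) *
                 (cplx R (tgt r) - cplx R (src r)) 0 j.
Proof.
move=> c0.
set g := fun r => cplx R (tgt r) - cplx R (src r).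
have Ef : fkappa src tgt k = \sum_(r < m) (fun z => (k r * monom z (src r)) *: g r).
  by rewrite fct_sumE; apply/funext => z.
have H : is_diff c (fkappa src tgt k)
   (\sum_(r < m) (fun v : 'rV[R]_n => (k r * (monom c (src r) *
        \sum_(i <- index_enum 'I_n) ((src r) 0 i)%:R * v 0 i / c 0 i)) *: g r)).
  rewrite Ef; apply: is_diff_sum' => r.
  apply: is_diffZl'.
  have := is_diffZ (k r) (is_diff_mon (src r) (index_enum 'I_n) c0).
  by [].
rewrite /jacobian (@diff_val _ _ _ _ _ _ _ H).
apply/matrixP => i j; rewrite !mxE fct_sumE summxE.
apply: eq_bigr => r _; rewrite !mxE.
rewrite (bigD1 i) //= big1 => [|l /negbTE nl]; last by rewrite !mxE nl mulr0 mul0r.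
rewrite !mxE !eqxx /= addr0 mulr1.
congr (_ * _); rewrite mulrA mulrC; done.
Qed.
End An.


Lemma rf_det (R : fieldType) n (A : 'M[R]_n) : row_free A = (\det A != 0).
Proof. by rewrite row_free_unit unitmxE unitfE. Qed.

Theorem corollary8p2 (R : realType) (n m : nat) (src tgt : 'I_m -> 'rV[nat]_n) :
  crn_wf src tgt ->
  crn_open R src tgt ->
  (forall (k : 'I_m -> R) (c : 'rV[R]_n),
      (forall r, 0 < k r) -> (forall i, 0 < c 0 i) ->
      exists w : 'rV[R]_n,
        [/\ w != 0, (w <= stoich R src tgt)%MS & w *m 'J (fkappa src tgt k) c = 0])
  <->
  (forall s : 'I_n -> 'I_m,
      injective s ->
      row_free (\matrix_(i < n) (cplx R (src (s i)) - cplx R (tgt (s i)))) ->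
      ~~ row_free (\matrix_(i < n) cplx R (src (s i)))).
Proof.
move=> _ Hopen.
pose Y : 'M[R]_(m, n) := \matrix_(r, i) (src r 0 i)%:R.
pose G : 'M[R]_(m, n) := \matrix_(r, j) (cplx R (tgt r) - cplx R (src r)) 0 j.
pose Yc (c : 'rV[R]_n) : 'M[R]_(m, n) := \matrix_(r, i) ((src r 0 i)%:R / c 0 i).
pose MM (A : 'M[R]_(m, n)) (l : 'I_m -> R) (B : 'M[R]_(m, n)) : 'M[R]_n :=
  \matrix_(i, j) \sum_r A r i * l r * B r j.
have jacM : forall (k : 'I_m -> R) (c : 'rV[R]_n), (forall i, c 0 i != 0) ->
    'J (fkappa src tgt k) c = MM (Yc c) (fun r => k r * monom c (src r)) G.
  move=> k c c0; rewrite jacE //; apply/matrixP => i j; rewrite !mxE.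
  by apply: eq_bigr => r _; rewrite !mxE.
have F1 : forall f : 'I_n -> 'I_m, \matrix_(i < n) cplx R (src (f i)) = rowsf f Y.
  by move=> f; apply/matrixP => i j; rewrite !mxE.
have F2 : forall f : 'I_n -> 'I_m,
    \matrix_(i < n) (cplx R (src (f i)) - cplx R (tgt (f i))) = (-1) *: rowsf f G.
  by move=> f; apply/matrixP => i j; rewrite !mxE mulN1r opprB.
have F2d : forall f : 'I_n -> 'I_m,
    row_free (\matrix_(i < n) (cplx R (src (f i)) - cplx R (tgt (f i)))) =
    (\det (rowsf f G) != 0).
  by move=> f; rewrite F2 rf_det detZ mulf_eq0 signr_eq0.
have nf0 : n`!%:R != 0 :> R by rewrite pnatr_eq0 -lt0n fact_gt0.
split.
- move=> H s sinj rfG; apply/negP => rfY.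
  have dG : \det (rowsf s G) != 0 by rewrite -F2d.
  have dY : \det (rowsf s Y) != 0 by rewrite -rf_det -F1.
  pose S : {set 'I_m} := s @: setT.
  pose kx (x : R) := fun r => if r \in S then 1 else x.
  pose P : {poly R} := \sum_(f : {ffun 'I_n -> 'I_m})
     (\prod_i (if f i \in S then 1 else 'X)) *
     (\det (rowsf f Y) * \det (rowsf f G))%:P.
  have PE : forall x, P.[x] = n`!%:R * \det (MM Y (kx x) G).
    move=> x; rewrite CB2 horner_sum; apply: eq_bigr => f _.
    rewrite hornerM hornerC horner_prod mulrA; congr (_ * _ * _).
    apply: eq_bigr => i _; rewrite /kx; case: (f i \in S).
      by rewrite -polyC1 hornerC.
    by rewrite hornerX.
  have M0 : MM Y (kx 0) G = (rowsf s Y)^T *m rowsf s G.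
    apply/matrixP => i j; rewrite !mxE.
    rewrite (bigID (fun r => r \in S)) /= [X in _ + X]big1 => [|r rS]; last first.
      by rewrite /kx (negbTE rS) mulr0 mul0r.
    rewrite addr0 big_imset /=; last by move=> a b _ _; exact: sinj.
    apply: eq_big => [l|l _]; first by rewrite in_setT.
    by rewrite /kx imset_f ?in_setT // mulr1 !mxE.
  have P0 : P.[0] != 0.
    by rewrite PE M0 det_mulmx det_tr !mulf_neq0.
  have Pn0 : P != 0 by apply: contraNneq P0 => ->; rewrite horner0.
  pose rs := [seq (i.+1)%:R : R | i <- iota 0 (size P)].
  have urs : uniq rs.
    rewrite map_inj_uniq ?iota_uniq // => a b /eqP.
    by rewrite eqr_nat eqSS => /eqP.
  have : ~~ all (root P) rs.
    apply/negP => allr; have := max_poly_roots Pn0 allr urs.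
    by rewrite size_map size_iota ltnn.
  case/allPn => x /mapP [i _ ->] nroot.
  have kpos : forall r, 0 < kx i.+1%:R r.
    by move=> r; rewrite /kx; case: (r \in S); rewrite ?ltr01 ?ltr0Sn.
  pose c : 'rV[R]_n := const_mx 1.
  have cpos : forall l, 0 < c 0 l by move=> l; rewrite mxE ltr01.
  have [w [w0 _ wJ]] := H _ c kpos cpos.
  have c0 : forall l, c 0 l != 0 by move=> l; rewrite mxE oner_eq0.
  have dJ : \det ('J (fkappa src tgt (kx i.+1%:R)) c) == 0 by apply/det0P; exists w.
  move: dJ; rewrite jacM //.
  have -> : MM (Yc c) (fun r => kx i.+1%:R r * monom c (src r)) G = MM Y (kx i.+1%:R) G.
    apply/matrixP => a b; rewrite !mxE; apply: eq_bigr => r _.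
    have -> : monom c (src r) = 1.
      by rewrite /monom big1 // => l _; rewrite mxE expr1n.
    by rewrite !mxE divr1 mulr1.
  move=> /eqP dJ; move: nroot; rewrite /root PE dJ mulr0 eqxx //.
- move=> H k c kpos cpos.
  have c0 : forall l, c 0 l != 0 by move=> l; rewrite gt_eqF.
  have dJ : \det ('J (fkappa src tgt k) c) = 0.
    apply: (mulfI nf0); rewrite mulr0 jacM // CB2.
    apply: big1 => f _.
    have [finj | fninj] := boolP (injectiveb f).
      have := H f (injectiveP _ finj); rewrite F2d F1.
      have [->|dG] := eqVneq (\det (rowsf f G)) 0; first by rewrite mulr0.
      move=> /(_ isT); rewrite rf_det negbK => /eqP dY.
      have -> : rowsf f (Yc c) = rowsf f Y *m diag_mx (\row_l (c 0 l)^-1).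
        apply/matrixP => a b; rewrite !mxE (bigD1 b) //= big1 => [|l /negbTE nl].
          by rewrite !mxE eqxx mulr1n addr0.
        by rewrite !mxE nl mulr0n mulr0.
      by rewrite det_mulmx dY !(mul0r, mulr0).
    case/injectivePn: fninj => a [b ab fab].
    rewrite (@determinant_alternate _ _ (rowsf f G) a b) ?mulr0 //.
    by move=> l; rewrite !mxE fab.
  have /det0P [w w0 wJ] : \det ('J (fkappa src tgt k) c) == 0 by rewrite dJ.
  exists w; split => //.
  exact: submx_full.
Qed.
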